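(* Let $n$ entities move in $\mathbb{R}^1$ along piecewise-linear trajectories $\sigma:[t_0,t_\tau]\to\mathbb{R}$ whose vertices are all at the common times $t_0<t_1<\dots<t_\tau$. Let $\mathcal{U}(t)=\max_\sigma \sigma(t)$, $\mathcal{L}(t)=\min_\sigma\sigma(t)$ and $\mathcal{I}(t)=(\mathcal{U}(t)+\mathcal{L}(t))/2$. Subdivide each interval $[t_i,t_{i+1}]$ into maximal subintervals (elementary intervals) on which $\mathcal{I}$ is a single linear function. Then the total number of elementary intervals over all of $[t_0,t_\tau]$ is at most $\tau(n+2)$.
   Context: $\mathcal{I}$ is called the ideal trajectory; it is the pointwise midpoint of the highest and lowest entity. *)

(* Defs.v *)
From Stdlib Require Import Reals Lra List.
Import ListNotations.
Open Scope R_scope.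

(* Upper envelope U(x) = max_{k<n} sigma k x  (meaningful for n >= 1). *)
Definition upper (n : nat) (sigma : nat -> R -> R) (x : R) : R :=
  fold_right Rmax (sigma 0%nat x) (map (fun k => sigma k x) (seq 0 n)).

Definition lower (n : nat) (sigma : nat -> R -> R) (x : R) : R :=
  fold_right Rmin (sigma 0%nat x) (map (fun k => sigma k x) (seq 0 n)).

Definition ideal (n : nat) (sigma : nat -> R -> R) (x : R) : R :=
  (upper n sigma x + lower n sigma x) / 2.

Definition affine_on (f : R -> R) (a b : R) : Prop :=
  exists alpha beta : R, forall x, a <= x <= b -> f x = alpha * x + beta.

Definition elementary_partition (f : R -> R) (a b : R) (s : list R) : Prop :=
  (2 <= length s)%nat /\
  nth 0 s 0 = a /\
  nth (length s - 1) s 0 = b /\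
  (forall j, (j + 1 < length s)%nat -> nth j s 0 < nth (j + 1) s 0) /\
  (forall j, (j + 1 < length s)%nat -> affine_on f (nth j s 0) (nth (j + 1) s 0)) /\
  (forall j, (1 <= j)%nat -> (j + 1 < length s)%nat ->
     ~ affine_on f (nth (j - 1) s 0) (nth (j + 1) s 0)).

Definition num_pieces (s : list R) : nat := (length s - 1)%nat.

Fixpoint nsum (m : nat) (g : nat -> nat) : nat :=
  match m with
  | O => O
  | S m' => (nsum m' g + g m')%nat
  end.

(* Main.v *)
Require Import Defs.
From Stdlib Require Import Reals Lra List Lia Classical IndefiniteDescription Wf_nat.
Import ListNotations.
Open Scope R_scope.

Lemma choice_fun {A B : Type} (P : A -> B -> Prop) :
  (forall a, exists b, P a b) -> exists f : A -> B, forall a, P a (f a).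
Proof.
  intro H. exists (fun a => proj1_sig (constructive_indefinite_description _ (H a))).
  intro a. exact (proj2_sig (constructive_indefinite_description _ (H a))).
Qed.

Lemma affine_on_sub f a b a' b' : affine_on f a b -> a <= a' -> b' <= b -> affine_on f a' b'.
Proof. intros [al [be H]] H1 H2. exists al, be. intros x Hx. apply H; lra. Qed.

Lemma cmp_aux a1 b1 a2 b2 x d : 0 < d -> a2*x+b2 <= a1*x+b1 ->
  exists d', 0 < d' /\ d' <= d /\
   ((forall y, x <= y <= x + d' -> a2*y+b2 <= a1*y+b1) \/
    (forall y, x <= y <= x + d' -> a1*y+b1 <= a2*y+b2)).
Proof.
  intros Hd HD.
  assert (E: forall y, a1*y+b1 - (a2*y+b2) = (a1*x+b1 - (a2*x+b2)) + (a1-a2)*(y-x)) by (intros; ring).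
  destruct (Rle_dec 0 (a1 - a2)) as [HA|HA].
  - exists d. split; [lra|split;[lra|left]]. intros y Hy.
    assert (0 <= (a1-a2)*(y-x)) by (apply Rmult_le_pos; lra). specialize (E y). lra.
  - destruct (Req_dec (a1*x+b1) (a2*x+b2)) as [HD0|HD0].
    + exists d. split; [lra|split;[lra|right]]. intros y Hy.
      assert (0 <= (a2-a1)*(y-x)) by (apply Rmult_le_pos; lra). specialize (E y). lra.
    + set (D := a1*x+b1 - (a2*x+b2)).
      assert (HDp : 0 < D) by (unfold D; lra).
      exists (Rmin d (D/(a2-a1))). split.
      { apply Rmin_glb_lt; auto. apply Rdiv_lt_0_compat; lra. }
      split. { apply Rmin_l. }
      left. intros y Hy.
      assert (Hyx: y - x <= D/(a2-a1)) by (pose proof (Rmin_r d (D/(a2-a1))); lra).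
      assert (H1: (a2-a1)*(y-x) <= (a2-a1)*(D/(a2-a1))) by (apply Rmult_le_compat_l; lra).
      assert (H2: (a2-a1)*(D/(a2-a1)) = D) by (field; lra).
      specialize (E y). fold D in E. lra.
Qed.

Lemma cmp a1 b1 a2 b2 x d : 0 < d ->
  exists d', 0 < d' /\ d' <= d /\
   ((forall y, x <= y <= x + d' -> a2*y+b2 <= a1*y+b1) \/
    (forall y, x <= y <= x + d' -> a1*y+b1 <= a2*y+b2)).
Proof.
  intros Hd. destruct (Rle_dec (a2*x+b2) (a1*x+b1)).
  - apply cmp_aux; auto.
  - destruct (cmp_aux a2 b2 a1 b1 x d Hd) as [d' [H1 [H2 [H3|H3]]]]; [lra| |].
    + exists d'. auto.
    + exists d'. auto.
Qed.

Lemma local_up n sigma a b x z :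
  (1 <= n)%nat -> (forall k, (k < n)%nat -> affine_on (sigma k) a b) ->
  a <= x -> x < z -> z <= b ->
  exists k d, (k < n)%nat /\ 0 < d /\ x + d <= z /\
    forall y, x <= y <= x + d -> upper n sigma y = sigma k y.
Proof.
  intros Hn Haff Hax Hxz Hzb. unfold upper.
  assert (G: forall l, (forall k, In k l -> (k < n)%nat) ->
    exists k d, (k < n)%nat /\ 0 < d /\ x + d <= z /\
    forall y, x <= y <= x + d ->
      fold_right Rmax (sigma 0%nat y) (map (fun k => sigma k y) l) = sigma k y).
  { induction l as [|h l IH]; intros Hl.
    - exists 0%nat, (z - x). repeat split; try lia; try lra.
    - destruct IH as [k [d [Hk [Hd [Hdz Hy]]]]]. { intros; apply Hl; simpl; auto. }
      assert (Hh: (h < n)%nat) by (apply Hl; simpl; auto).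
      destruct (Haff h Hh) as [a1 [b1 E1]].
      destruct (Haff k Hk) as [a2 [b2 E2]].
      destruct (cmp a1 b1 a2 b2 x d Hd) as [d' [Hd' [Hd'd [C|C]]]].
      + exists h, d'. repeat split; auto; try lra. intros y Hy'. simpl.
        rewrite (Hy y) by lra. rewrite (E1 y), (E2 y) by lra.
        apply Rmax_left. apply C; auto.
      + exists k, d'. repeat split; auto; try lra. intros y Hy'. simpl.
        rewrite (Hy y) by lra. rewrite (E1 y), (E2 y) by lra.
        apply Rmax_right. apply C; auto. }
  apply G. intros k Hk. apply in_seq in Hk. lia.
Qed.

Lemma local_lo n sigma a b x z :
  (1 <= n)%nat -> (forall k, (k < n)%nat -> affine_on (sigma k) a b) ->
  a <= x -> x < z -> z <= b ->
  exists k d, (k < n)%nat /\ 0 < d /\ x + d <= z /\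
    forall y, x <= y <= x + d -> lower n sigma y = sigma k y.
Proof.
  intros Hn Haff Hax Hxz Hzb. unfold lower.
  assert (G: forall l, (forall k, In k l -> (k < n)%nat) ->
    exists k d, (k < n)%nat /\ 0 < d /\ x + d <= z /\
    forall y, x <= y <= x + d ->
      fold_right Rmin (sigma 0%nat y) (map (fun k => sigma k y) l) = sigma k y).
  { induction l as [|h l IH]; intros Hl.
    - exists 0%nat, (z - x). repeat split; try lia; try lra.
    - destruct IH as [k [d [Hk [Hd [Hdz Hy]]]]]. { intros; apply Hl; simpl; auto. }
      assert (Hh: (h < n)%nat) by (apply Hl; simpl; auto).
      destruct (Haff h Hh) as [a1 [b1 E1]].
      destruct (Haff k Hk) as [a2 [b2 E2]].
      destruct (cmp a1 b1 a2 b2 x d Hd) as [d' [Hd' [Hd'd [C|C]]]].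
      + exists k, d'. repeat split; auto; try lra. intros y Hy'. simpl.
        rewrite (Hy y) by lra. rewrite (E1 y), (E2 y) by lra.
        apply Rmin_right. apply C; auto.
      + exists h, d'. repeat split; auto; try lra. intros y Hy'. simpl.
        rewrite (Hy y) by lra. rewrite (E1 y), (E2 y) by lra.
        apply Rmin_left. apply C; auto. }
  apply G. intros k Hk. apply in_seq in Hk. lia.
Qed.

Lemma ideal_right n sigma a b x z : (1<=n)%nat -> (forall k, (k<n)%nat -> affine_on (sigma k) a b) ->
  a <= x -> x < z -> z <= b -> exists d, 0 < d /\ x + d <= z /\ affine_on (ideal n sigma) x (x+d).
Proof.
  intros Hn Haff Hax Hxz Hzb.
  destruct (local_up n sigma a b x z) as [k [d1 [Hk [Hd1 [Hz1 H1]]]]]; auto.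
  destruct (local_lo n sigma a b x z) as [k' [d2 [Hk' [Hd2 [Hz2 H2]]]]]; auto.
  destruct (Haff k Hk) as [a1 [b1 E1]].
  destruct (Haff k' Hk') as [a2 [b2 E2]].
  pose proof (Rmin_l d1 d2). pose proof (Rmin_r d1 d2).
  exists (Rmin d1 d2). split. apply Rmin_glb_lt; auto. split. lra.
  exists ((a1+a2)/2), ((b1+b2)/2). intros y Hy. unfold ideal.
  rewrite (H1 y), (H2 y) by lra. rewrite (E1 y), (E2 y) by lra. field.
Qed.

Lemma ideal_left n sigma a b x w : (1<=n)%nat -> (forall k, (k<n)%nat -> affine_on (sigma k) a b) ->
  a <= w -> w < x -> x <= b -> exists d, 0 < d /\ w <= x - d /\ affine_on (ideal n sigma) (x-d) x.
Proof.
  intros Hn Haff Hw Hwx Hxb.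
  pose (sg := fun k y => sigma k (-y)).
  assert (Haff' : forall k, (k<n)%nat -> affine_on (sg k) (-b) (-a)).
  { intros k Hk. destruct (Haff k Hk) as [al [be E]]. exists (-al), be. intros y Hy. unfold sg. rewrite E by lra. ring. }
  destruct (ideal_right n sg (-b) (-a) (-x) (-w) Hn Haff') as [d [Hd [Hdz [c [e E]]]]]; try lra.
  exists d. split; auto. split; [lra|]. exists (-c), e. intros y Hy.
  replace (ideal n sigma y) with (ideal n sg (-y)).
  - rewrite E by lra. ring.
  - change (ideal n sg (-y)) with (ideal n sigma (- - y)). rewrite Ropp_involutive. reflexivity.
Qed.

Definition PA (f : R -> R) (a z : R) : Prop :=
  exists (m : nat) (r : nat -> R), (1 <= m)%nat /\ r 0%nat = a /\ r m = z /\
   (forall j, (j < m)%nat -> r j < r (S j)) /\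
   (forall j, (j < m)%nat -> affine_on f (r j) (r (S j))).

Lemma PA_base f a z : a < z -> affine_on f a z -> PA f a z.
Proof. intros. exists 1%nat, (fun j => match j with O => a | _ => z end).
  repeat split; auto; intros j Hj; assert (j = 0%nat) by lia; subst; simpl; auto. Qed.

Lemma PA_ext f a z w : PA f a z -> z < w -> affine_on f z w -> PA f a w.
Proof.
  intros [m [r [Hm [H0 [Hmz [Hinc Haff]]]]]] Hzw Hw.
  exists (S m), (fun j => if (j <=? m)%nat then r j else w).
  repeat split.
  - lia.
  - simpl. auto.
  - destruct (Nat.leb_spec (S m) m); [lia|auto].
  - intros j Hj. destruct (Nat.leb_spec j m); destruct (Nat.leb_spec (S j) m); try lia.
    + apply Hinc; lia.
    + assert (j = m) by lia; subst j. lra.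
  - intros j Hj. destruct (Nat.leb_spec j m); destruct (Nat.leb_spec (S j) m); try lia.
    + apply Haff; lia.
    + assert (j = m) by lia. subst j. rewrite Hmz. auto.
Qed.

Lemma PA_exists n sigma a b : (1<=n)%nat -> (forall k, (k<n)%nat -> affine_on (sigma k) a b) -> a < b -> PA (ideal n sigma) a b.
Proof.
  intros Hn Haff Hab.
  destruct (ideal_right n sigma a b a b Hn Haff) as [d0 [Hd0 [Hd0b Haf0]]]; try lra.
  assert (HE: exists z, (fun z => a < z <= b /\ PA (ideal n sigma) a z) z).
  { exists (a+d0). split. lra. apply PA_base; auto. lra. }
  assert (HB: bound (fun z => a < z <= b /\ PA (ideal n sigma) a z)). { exists b. intros z [Hz _]. lra. }
  destruct (completeness _ HB HE) as [c [Hub Hlub]].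
  assert (Hac: a < c). { apply Rlt_le_trans with (a+d0). lra. apply Hub. split; [lra|]. apply PA_base; auto; lra. }
  assert (Hcb: c <= b). { apply Hlub. intros z [Hz _]. lra. }
  assert (HPc: PA (ideal n sigma) a c).
  { destruct (ideal_left n sigma a b c a Hn Haff) as [d [Hd [Hdw Hafd]]]; try lra.
    assert (Hex: exists z, (a < z <= b /\ PA (ideal n sigma) a z) /\ c - d < z).
    { apply NNPP. intro Hne. assert (c <= c - d). { apply Hlub. intros z Hz. apply Rnot_lt_le. intro. apply Hne. eauto. } lra. }
    destruct Hex as [z [[Hz HPz] Hzc]].
    assert (z <= c) by (apply Hub; split; auto).
    destruct (Req_dec z c) as [<-|Hne]. auto.
    apply PA_ext with z; [auto|lra|apply affine_on_sub with (c-d) c; [auto|lra|lra]].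
  }
  destruct (Req_dec c b) as [<-|Hne]; auto.
  destruct (ideal_right n sigma a b c b Hn Haff) as [d [Hd [Hdb Hafd]]]; try lra.
  exfalso. assert (c + d <= c). { apply Hub. split. lra. apply PA_ext with c; auto. lra. } lra.
Qed.

Lemma nth_map_seq (r : nat -> R) m j : (j <= m)%nat -> nth j (map r (seq 0 (S m))) 0 = r j.
Proof. intros H. rewrite nth_indep with (d' := r 0%nat). rewrite map_nth. rewrite seq_nth; [reflexivity|lia]. rewrite length_map, length_seq. lia. Qed.

Lemma coarsen f a b : PA f a b -> exists s, elementary_partition f a b s.
Proof.
  intros [m [r H]]. revert r H. induction m as [m IH] using lt_wf_ind.
  intros r [Hm [H0 [Hmb [Hinc Haff]]]].
  destruct (classic (exists j, (1 <= j)%nat /\ (j + 1 < S m)%nat /\ affine_on f (r (j-1)%nat) (r (j+1)%nat))) as [[j [Hj1 [Hjm Hja]]]|Hno].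
  - apply (IH (m-1)%nat) with (fun i => if (i <? j)%nat then r i else r (S i)); [lia|].
    repeat split.
    + lia.
    + destruct (Nat.ltb_spec 0 j); [auto|lia].
    + destruct (Nat.ltb_spec (m-1) j); [lia|]. replace (S (m-1)) with m by lia. auto.
    + intros i Hi. destruct (Nat.ltb_spec i j); destruct (Nat.ltb_spec (S i) j); try lia.
      * apply Hinc; lia.
      * apply Rlt_trans with (r (S i)); apply Hinc; lia.
      * apply Hinc; lia.
    + intros i Hi. destruct (Nat.ltb_spec i j); destruct (Nat.ltb_spec (S i) j); try lia.
      * apply Haff; lia.
      * assert (i = (j-1)%nat) by lia. subst i. replace (S (S (j-1))) with (j+1)%nat by lia. auto.
      * apply Haff; lia.
  - exists (map r (seq 0 (S m))). unfold elementary_partition. rewrite length_map, length_seq.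
    repeat split.
    + lia.
    + rewrite nth_map_seq; auto; lia.
    + replace (S m - 1)%nat with m by lia. rewrite nth_map_seq; auto.
    + intros j Hj. rewrite !nth_map_seq by lia. replace (j+1)%nat with (S j) by lia. apply Hinc; lia.
    + intros j Hj. rewrite !nth_map_seq by lia. replace (j+1)%nat with (S j) by lia. apply Haff; lia.
    + intros j Hj1 Hj Ha. rewrite !nth_map_seq in Ha by lia. apply Hno. exists j. auto.
Qed.

Lemma filter_cover {A} (f g : A -> bool) (l : list A) : (forall x, In x l -> f x = true \/ g x = true) ->
  (length l <= length (filter f l) + length (filter g l))%nat.
Proof. induction l as [|x l IH]; simpl; intros H. lia.
  assert (IH' := IH (fun y Hy => H y (or_intror Hy))).
  destruct (H x (or_introl eq_refl)) as [E|E]; rewrite E; [destruct (g x) | destruct (f x)]; simpl; lia.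
Qed.

Lemma NoDup_map_inj {A B} (f : A -> B) l : NoDup l -> (forall x y, In x l -> In y l -> f x = f y -> x = y) -> NoDup (map f l).
Proof. induction l as [|a l IH]; simpl; intros Hnd Hinj. constructor.
  inversion Hnd; subst. constructor.
  - intro Hin. apply in_map_iff in Hin. destruct Hin as [x [Hx Hxl]]. assert (x = a) by (apply Hinj; auto). subst. contradiction.
  - apply IH; auto. Qed.

Lemma count_lemma (n m : nat) (T B : nat -> nat) (al : nat -> R) :
  (forall j, (j < m)%nat -> (T j < n)%nat) ->
  (forall j, (j < m)%nat -> (B j < n)%nat) ->
  (forall j j', (j <= j')%nat -> (j' < m)%nat -> al (T j) <= al (T j')) ->
  (forall j j', (j <= j')%nat -> (j' < m)%nat -> al (B j') <= al (B j)) ->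
  (forall j j', (j < m)%nat -> (j' < m)%nat -> T j = B j' ->
     (forall g, (g < n)%nat -> al (T j) <= al g) \/ (forall g, (g < n)%nat -> al g <= al (T j))) ->
  (forall j, (1 <= j)%nat -> (j < m)%nat -> al (T (j-1)%nat) <> al (T j) \/ al (B (j-1)%nat) <> al (B j)) ->
  (m - 1 <= n)%nat.
Proof.
  intros HT HB MT MB Cross Kink.
  pose (up := fun j => if Rlt_dec (al (T (j-1)%nat)) (al (T j)) then true else false).
  pose (dn := fun j => if Rlt_dec (al (B j)) (al (B (j-1)%nat)) then true else false).
  assert (Hup: forall j, up j = true -> al (T (j-1)%nat) < al (T j)).
  { intros j. unfold up. destruct (Rlt_dec _ _); auto; discriminate. }
  assert (Hdn: forall j, dn j = true -> al (B j) < al (B (j-1)%nat)).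
  { intros j. unfold dn. destruct (Rlt_dec _ _); auto; discriminate. }
  assert (Hcov: (length (seq 1 (m-1)) <= length (filter up (seq 1 (m-1))) + length (filter dn (seq 1 (m-1))))%nat).
  { apply filter_cover. intros j Hj. apply in_seq in Hj.
    destruct (Kink j) as [K|K]; try lia.
    - left. unfold up. destruct (Rlt_dec _ _); auto. exfalso. apply K. apply Rle_antisym. apply MT; lia. lra.
    - right. unfold dn. destruct (Rlt_dec _ _); auto. exfalso. apply K. apply Rle_antisym. lra. apply MB; lia. }
  rewrite length_seq in Hcov.
  set (L := map T (filter up (seq 1 (m-1))) ++ map B (filter dn (seq 1 (m-1)))).
  assert (HL: (length L <= length (seq 0 n))%nat).
  { apply NoDup_incl_length.
    - unfold L. apply NoDup_app.
      + apply NoDup_map_inj. apply NoDup_filter, seq_NoDup.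
        intros x y Hx Hy Exy. apply filter_In in Hx, Hy. destruct Hx as [Hx Ux]. destruct Hy as [Hy Uy].
        apply in_seq in Hx, Hy. apply Hup in Ux, Uy.
        destruct (Nat.lt_total x y) as [Hlt|[Heq|Hlt]]; auto; exfalso.
        * assert (al (T x) <= al (T (y-1)%nat)) by (apply MT; lia). rewrite Exy in *. lra.
        * assert (al (T y) <= al (T (x-1)%nat)) by (apply MT; lia). rewrite Exy in *. lra.
      + apply NoDup_map_inj. apply NoDup_filter, seq_NoDup.
        intros x y Hx Hy Exy. apply filter_In in Hx, Hy. destruct Hx as [Hx Ux]. destruct Hy as [Hy Uy].
        apply in_seq in Hx, Hy. apply Hdn in Ux, Uy.
        destruct (Nat.lt_total x y) as [Hlt|[Heq|Hlt]]; auto; exfalso.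
        * assert (al (B (y-1)%nat) <= al (B x)) by (apply MB; lia). rewrite Exy in *. lra.
        * assert (al (B (x-1)%nat) <= al (B y)) by (apply MB; lia). rewrite Exy in *. lra.
      + intros v Hv Hv'. apply in_map_iff in Hv, Hv'.
        destruct Hv as [x [Ex Hx]]. destruct Hv' as [y [Ey Hy]].
        apply filter_In in Hx, Hy. destruct Hx as [Hx Ux]. destruct Hy as [Hy Uy].
        apply in_seq in Hx, Hy. apply Hup in Ux. apply Hdn in Uy.
        assert (Exy: T x = B y) by congruence.
        destruct (Cross x y) as [C|C]; try lia.
        * assert (al (T x) <= al (T (x-1)%nat)) by (apply C, HT; lia). lra.
        * assert (al (B (y-1)%nat) <= al (T x)) by (apply C, HB; lia). rewrite Exy in *. lra.
    - intros v Hv. unfold L in Hv. apply in_app_or in Hv. apply in_seq.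
      destruct Hv as [Hv|Hv]; apply in_map_iff in Hv; destruct Hv as [x [Ex Hx]];
        apply filter_In in Hx; destruct Hx as [Hx _]; apply in_seq in Hx; subst v.
      + assert (T x < n)%nat by (apply HT; lia). lia.
      + assert (B x < n)%nat by (apply HB; lia). lia. }
  unfold L in HL. rewrite length_app, !length_map, length_seq in HL. lia.
Qed.

Lemma slope_cmp a1 b1 a2 b2 p q : p < q -> a2*p+b2 <= a1*p+b1 -> a1*q+b1 <= a2*q+b2 -> a1 <= a2.
Proof. intros Hpq H1 H2. destruct (Rle_dec a1 a2); auto. exfalso.
  assert (0 < (a1-a2)*(q-p)) by (apply Rmult_lt_0_compat; lra).
  assert (E: (a1-a2)*(q-p) = (a1*q+b1-(a2*q+b2)) - (a1*p+b1-(a2*p+b2))) by ring. lra. Qed.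

Lemma two_point c d A e y0 y1 : c*y0+d = A*y0+e -> c*y1+d = A*y1+e -> y0 < y1 -> c = A.
Proof. intros H0 H1 H.
  assert (E: (c-A)*(y1-y0) = 0) by (assert (E': (c-A)*(y1-y0) = (c*y1+d-(A*y1+e)) - (c*y0+d-(A*y0+e))) by ring; lra).
  apply Rmult_integral in E. destruct E; lra. Qed.

Lemma upper_ge n sigma k y : (k < n)%nat -> sigma k y <= upper n sigma y.
Proof. intros Hk. unfold upper. assert (Hin: In k (seq 0 n)) by (apply in_seq; lia).
  revert Hin. generalize (seq 0 n). intros l. induction l as [|h l IH]; simpl; intros Hl. contradiction.
  destruct Hl as [->|Hl]. apply Rmax_l. eapply Rle_trans; [apply IH; auto| apply Rmax_r]. Qed.

Lemma lower_le n sigma k y : (k < n)%nat -> lower n sigma y <= sigma k y.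
Proof. intros Hk. unfold lower. assert (Hin: In k (seq 0 n)) by (apply in_seq; lia).
  revert Hin. generalize (seq 0 n). intros l. induction l as [|h l IH]; simpl; intros Hl. contradiction.
  destruct Hl as [->|Hl]. apply Rmin_l. eapply Rle_trans; [apply Rmin_r| apply IH; auto]. Qed.

Lemma interval_bound n sigma a b s : (1 <= n)%nat -> a < b ->
  (forall k, (k<n)%nat -> affine_on (sigma k) a b) ->
  elementary_partition (ideal n sigma) a b s -> (num_pieces s <= n + 2)%nat.
Proof.
  intros Hn Hab Haff [Hlen [H0 [Hend [Hinc [Hpaff Hmax]]]]].
  destruct (choice_fun (fun k (p : R*R) => (k < n)%nat -> forall x, a <= x <= b -> sigma k x = fst p * x + snd p)) as [AB HAB].
  { intros k. destruct (Compare_dec.lt_dec k n) as [Hk|Hk].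
    - destruct (Haff k Hk) as [al [be E]]. exists (al, be). intros _. exact E.
    - exists (0,0). intros; lia. }
  pose (al := fun k => fst (AB k)). pose (be := fun k => snd (AB k)).
  assert (Haf: forall k x, (k<n)%nat -> a <= x <= b -> sigma k x = al k * x + be k) by (intros; apply HAB; auto).
  pose (m := (length s - 1)%nat).
  pose (r := fun j => nth j s 0).
  assert (Hm1: (1 <= m)%nat) by (unfold m; lia).
  assert (Hr0: r 0%nat = a) by exact H0.
  assert (Hrm: r m = b) by exact Hend.
  assert (Hri: forall j, (j < m)%nat -> r j < r (S j)).
  { intros j Hj. unfold r. replace (S j) with (j+1)%nat by lia. apply Hinc. unfold m in Hj. lia. }
  assert (Hpa: forall j, (j < m)%nat -> affine_on (ideal n sigma) (r j) (r (S j))).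
  { intros j Hj. unfold r. replace (S j) with (j+1)%nat by lia. apply Hpaff. unfold m in Hj. lia. }
  assert (Hmono: forall j k, (j < k)%nat -> (k <= m)%nat -> r j < r k).
  { intros j k Hjk. induction k. lia. intros Hk. destruct (Nat.eq_dec j k). subst. apply Hri; lia. apply Rlt_trans with (r k). apply IHk; lia. apply Hri; lia. }
  assert (Hmono': forall j k, (j <= k)%nat -> (k <= m)%nat -> r j <= r k).
  { intros. destruct (Nat.eq_dec j k). subst; lra. left; apply Hmono; lia. }
  destruct (choice_fun (fun j (q : nat * nat * R) => (j < m)%nat ->
      (fst (fst q) < n)%nat /\ (snd (fst q) < n)%nat /\ 0 < snd q /\ r j + snd q <= r (S j) /\
      forall y, r j <= y <= r j + snd q -> upper n sigma y = sigma (fst (fst q)) y /\ lower n sigma y = sigma (snd (fst q)) y)) as [Q HQ].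
  { intros j. destruct (Compare_dec.lt_dec j m) as [Hj|Hj].
    - assert (a <= r j) by (rewrite <- Hr0; apply Hmono'; lia).
      assert (r (S j) <= b) by (rewrite <- Hrm; apply Hmono'; lia).
      pose proof (Hri j Hj).
      destruct (local_up n sigma a b (r j) (r (S j))) as [k1 [d1 [Hk1 [Hd1 [Hz1 UU1]]]]]; auto.
      destruct (local_lo n sigma a b (r j) (r (S j))) as [k2 [d2 [Hk2 [Hd2 [Hz2 UU2]]]]]; auto.
      pose proof (Rmin_l d1 d2). pose proof (Rmin_r d1 d2).
      exists (k1, k2, Rmin d1 d2). intros _. simpl. repeat split; auto.
      + apply Rmin_glb_lt; auto.
      + lra.
      + apply UU1; lra.
      + apply UU2; lra.
    - exists (0%nat, 0%nat, 0). intros; lia. }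
  pose (T := fun j => fst (fst (Q j))). pose (Bt := fun j => snd (fst (Q j))). pose (D := fun j => snd (Q j)).
  assert (HT: forall j, (j<m)%nat -> (T j < n)%nat) by (intros j Hj; apply (HQ j Hj)).
  assert (HB: forall j, (j<m)%nat -> (Bt j < n)%nat) by (intros j Hj; apply (HQ j Hj)).
  assert (HD: forall j, (j<m)%nat -> 0 < D j) by (intros j Hj; apply (HQ j Hj)).
  assert (HDz: forall j, (j<m)%nat -> r j + D j <= r (S j)) by (intros j Hj; apply (HQ j Hj)).
  assert (HU: forall j y, (j<m)%nat -> r j <= y <= r j + D j -> upper n sigma y = sigma (T j) y)
    by (intros j y Hj Hy; apply (HQ j Hj); auto).
  assert (HL: forall j y, (j<m)%nat -> r j <= y <= r j + D j -> lower n sigma y = sigma (Bt j) y)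
    by (intros j y Hj Hy; apply (HQ j Hj); auto).
  assert (Hab_r: forall j y, (j<m)%nat -> r j <= y <= r j + D j -> a <= y <= b).
  { intros j y Hj Hy. pose proof (HDz j Hj). assert (a <= r j) by (rewrite <- Hr0; apply Hmono'; lia).
    assert (r (S j) <= b) by (rewrite <- Hrm; apply Hmono'; lia). lra. }
  assert (Hfin: (m - 1 <= n)%nat).
  { apply (count_lemma n m T Bt al); auto.
    - intros j j' Hjj' Hj'. destruct (Nat.eq_dec j j'). subst; lra.
      assert (Hj: (j < m)%nat) by lia.
      set (p := r j). set (q := r j' + D j').
      assert (p < q). { unfold p, q. pose proof (Hmono j j'). pose proof (HD j' Hj'). assert (r j < r j') by (apply Hmono; lia). lra. }
      pose proof (HD j Hj). pose proof (HD j' Hj').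
      assert (E1: upper n sigma p = sigma (T j) p) by (apply (HU j p Hj); unfold p; lra).
      assert (E2: upper n sigma q = sigma (T j') q) by (apply (HU j' q Hj'); unfold q; lra).
      pose proof (upper_ge n sigma (T j') p (HT j' Hj')).
      pose proof (upper_ge n sigma (T j) q (HT j Hj)).
      assert (Hp: a <= p <= b) by (apply (Hab_r j); auto; unfold p; lra).
      assert (Hq: a <= q <= b) by (apply (Hab_r j'); auto; unfold q; lra).
      rewrite !(Haf (T j)), !(Haf (T j')) in * by auto.
      apply (slope_cmp _ (be (T j)) _ (be (T j')) p q); lra.
    - intros j j' Hjj' Hj'. destruct (Nat.eq_dec j j'). subst; lra.
      assert (Hj: (j < m)%nat) by lia.
      set (p := r j). set (q := r j' + D j').
      assert (p < q). { unfold p, q. pose proof (HD j' Hj'). assert (r j < r j') by (apply Hmono; lia). lra. }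
      pose proof (HD j Hj). pose proof (HD j' Hj').
      assert (E1: lower n sigma p = sigma (Bt j) p) by (apply (HL j p Hj); unfold p; lra).
      assert (E2: lower n sigma q = sigma (Bt j') q) by (apply (HL j' q Hj'); unfold q; lra).
      pose proof (lower_le n sigma (Bt j') p (HB j' Hj')).
      pose proof (lower_le n sigma (Bt j) q (HB j Hj)).
      assert (Hp: a <= p <= b) by (apply (Hab_r j); auto; unfold p; lra).
      assert (Hq: a <= q <= b) by (apply (Hab_r j'); auto; unfold q; lra).
      rewrite !(Haf (Bt j)), !(Haf (Bt j')) in * by auto.
      apply (slope_cmp _ (be (Bt j')) _ (be (Bt j)) p q); lra.
    - intros j j' Hj Hj' Ejj. destruct (Compare_dec.le_lt_dec j j') as [Hle|Hlt].
      + left. intros g Hg.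
        set (x := r j). set (y := r j' + D j').
        assert (x < y). { unfold x, y. pose proof (HD j' Hj'). pose proof (Hmono' j j' Hle ltac:(lia)). lra. }
        pose proof (HD j Hj). pose proof (HD j' Hj').
        assert (E1: upper n sigma x = sigma (T j) x) by (apply (HU j x Hj); unfold x; lra).
        assert (E2: lower n sigma y = sigma (Bt j') y) by (apply (HL j' y Hj'); unfold y; lra).
        pose proof (upper_ge n sigma g x Hg). pose proof (lower_le n sigma g y Hg).
        assert (Hx: a <= x <= b) by (apply (Hab_r j); auto; unfold x; lra).
        assert (Hy: a <= y <= b) by (apply (Hab_r j'); auto; unfold y; lra).
        rewrite <- Ejj in E2.
        rewrite !(Haf (T j)), !(Haf g) in * by auto.
        apply (slope_cmp _ (be (T j)) _ (be g) x y); lra.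
      + right. intros g Hg.
        set (x := r j). set (y := r j').
        assert (y < x). { unfold x, y. apply Hmono; lia. }
        pose proof (HD j Hj). pose proof (HD j' Hj').
        assert (E1: upper n sigma x = sigma (T j) x) by (apply (HU j x Hj); unfold x; lra).
        assert (E2: lower n sigma y = sigma (Bt j') y) by (apply (HL j' y Hj'); unfold y; lra).
        pose proof (upper_ge n sigma g x Hg). pose proof (lower_le n sigma g y Hg).
        assert (Hx: a <= x <= b) by (apply (Hab_r j); auto; unfold x; lra).
        assert (Hy: a <= y <= b) by (apply (Hab_r j'); auto; unfold y; lra).
        rewrite <- Ejj in E2.
        rewrite !(Haf (T j)), !(Haf g) in * by auto.
        apply (slope_cmp _ (be g) _ (be (T j)) y x); lra.
    - intros j Hj1 Hjm.
      destruct (Req_dec (al (T (j-1)%nat)) (al (T j))) as [ET|ET]; [|auto].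
      destruct (Req_dec (al (Bt (j-1)%nat)) (al (Bt j))) as [EB|EB]; [|auto].
      exfalso.
      assert (Hj0: (j - 1 < m)%nat) by lia.
      assert (HSj: S (j-1) = j) by lia.
      apply (Hmax j Hj1 ltac:(unfold m in Hjm; lia)).
      fold (r (j-1)%nat). fold (r (j+1)%nat). replace (j+1)%nat with (S j) by lia.
      pose proof (Hpa (j-1)%nat Hj0) as [c1 [d1 P1]]. rewrite HSj in P1.
      pose proof (Hpa j Hjm) as [c2 [d2 P2]].
      pose proof (HD (j-1)%nat Hj0) as D1. pose proof (HDz (j-1)%nat Hj0) as Z1. rewrite HSj in Z1.
      pose proof (HD j Hjm) as D2. pose proof (HDz j Hjm) as Z2.
      pose proof (Hri (j-1)%nat Hj0) as R1. rewrite HSj in R1. pose proof (Hri j Hjm) as R2.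
      assert (Islope: forall i y, (i < m)%nat -> r i <= y <= r i + D i ->
         ideal n sigma y = (al (T i) + al (Bt i))/2 * y + (be (T i) + be (Bt i))/2).
      { intros i y Hi Hy. unfold ideal. rewrite (HU i y), (HL i y) by auto.
        assert (a <= y <= b) by (apply (Hab_r i); auto). rewrite (Haf (T i) y), (Haf (Bt i) y) by auto. field. }
      assert (C1: c1 = (al (T (j-1)%nat) + al (Bt (j-1)%nat))/2).
      { apply (two_point c1 d1 _ ((be (T (j-1)%nat) + be (Bt (j-1)%nat))/2) (r (j-1)%nat) (r (j-1)%nat + D (j-1)%nat)).
        - rewrite <- P1 by lra. apply Islope; auto; lra.
        - rewrite <- P1 by lra. apply Islope; auto; lra.
        - lra. }
      assert (C2: c2 = (al (T j) + al (Bt j))/2).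
      { apply (two_point c2 d2 _ ((be (T j) + be (Bt j))/2) (r j) (r j + D j)).
        - rewrite <- P2 by lra. apply Islope; auto; lra.
        - rewrite <- P2 by lra. apply Islope; auto; lra.
        - lra. }
      assert (C: c1 = c2) by (rewrite C1, C2, ET, EB; reflexivity).
      assert (Dd: d1 = d2). { assert (c1 * r j + d1 = c2 * r j + d2) by (rewrite <- (P1 (r j)), <- (P2 (r j)) by lra; reflexivity). rewrite <- C in H. lra. }
      exists c1, d1. intros y Hy. destruct (Rle_dec y (r j)).
      + apply P1; lra.
      + rewrite C, Dd. apply P2; lra. }
  unfold num_pieces. unfold m in Hfin. lia.
Qed.

Lemma nsum_le tau g c : (forall i, (i < tau)%nat -> (g i <= c)%nat) -> (nsum tau g <= tau * c)%nat.
Proof. induction tau; simpl; intros H. lia. assert (g tau <= c)%nat by (apply H; lia).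
  assert (nsum tau g <= tau * c)%nat by (apply IHtau; intros; apply H; lia). lia. Qed.

Theorem mainTheorem1
  (n tau : nat) (t : nat -> R) (sigma : nat -> R -> R)
  (Hn : (1 <= n)%nat)
  (Ht : forall i, (i < tau)%nat -> t i < t (S i))
  (Hpl : forall k i, (k < n)%nat -> (i < tau)%nat ->
           affine_on (sigma k) (t i) (t (S i))) :
  (forall i, (i < tau)%nat ->
     exists s, elementary_partition (ideal n sigma) (t i) (t (S i)) s) /\
  (forall P : nat -> list R,
     (forall i, (i < tau)%nat ->
        elementary_partition (ideal n sigma) (t i) (t (S i)) (P i)) ->
     (nsum tau (fun i => num_pieces (P i)) <= tau * (n + 2))%nat).
Proof.
  split.
  - intros i Hi. apply coarsen. apply PA_exists; auto.
  - intros P HP. apply nsum_le. intros i Hi.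
    apply (interval_bound n sigma (t i) (t (S i))); auto.
Qed.
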